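(* Let $\mathbb{K}$ be a field of characteristic $0$ and let $G$ be a subgroup of the symmetric group $\Sigma_3$. Let $(A,\mu)$ be a $G$-associative algebra over $\mathbb{K}$ and let $\alpha \colon A \to A$ be a linear map such that $\alpha \circ \mu = \mu \circ \alpha^{\otimes 2}$. Then $(A,\mu_\alpha = \alpha \circ \mu,\alpha)$ is a $G$-Hom-associative algebra. Moreover, $\alpha$ is multiplicative with respect to $\mu_\alpha$, i.e., $\alpha \circ \mu_\alpha = \mu_\alpha \circ \alpha^{\otimes 2}$. Suppose further that $(B,\mu')$ is another $G$-associative algebra and that $\alpha' \colon B \to B$ is a linear map such that $\alpha' \circ \mu' = \mu' \circ \alpha'^{\otimes 2}$. If $f \colon A \to B$ is a linear map with $f \circ \mu = \mu' \circ f^{\otimes 2}$ and $f \circ \alpha = \alpha' \circ f$, then $f \colon (A,\mu_\alpha,\alpha) \to (B,\mu'_{\alpha'} = \alpha' \circ \mu',\alpha')$ is a morphism of $G$-Hom-associative algebras.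
   Context: All vector spaces and (multi)linear maps are over a fixed field $\mathbb{K}$ of characteristic $0$. For $G \subseteq \Sigma_3$ a subgroup, a $G$-Hom-associative algebra is a triple $(A,\mu,\alpha)$ with $A$ a vector space, $\mu \colon A \otimes A \to A$ bilinear (written $\mu(x,y) = xy$) and $\alpha \colon A \to A$ linear (not required to be multiplicative), such that for all $x_1,x_2,x_3 \in A$: $$\sum_{\sigma \in G} (-1)^{\varepsilon(\sigma)} \left\{(x_{\sigma(1)}x_{\sigma(2)})\alpha(x_{\sigma(3)}) - \alpha(x_{\sigma(1)})(x_{\sigma(2)}x_{\sigma(3)})\right\} = 0,$$ where $\varepsilon(\sigma)$ denotes the signature of $\sigma$. A $G$-associative algebra is a (not necessarily associative) algebra $(A,\mu)$ satisfying this identity with $\alpha = \mathrm{Id}_A$. A morphism $f \colon (A,\mu_A,\alpha_A) \to (B,\mu_B,\alpha_B)$ of $G$-Hom-associative algebras is a linear map $f \colon A \to B$ with $f \circ \alpha_A = \alpha_B \circ f$ and $f \circ \mu_A = \mu_B \circ f^{\otimes 2}$. *)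

(* Defs.v *)
From HB Require Import structures.
From mathcomp Require Import all_boot all_order all_algebra all_fingroup.
Set Implicit Arguments. Unset Strict Implicit. Unset Printing Implicit Defensive.
Import GRing.Theory.
Local Open Scope ring_scope.

Definition bilinear_mul (K : fieldType) (V : lmodType K) (mu : V -> V -> V) : Prop :=
  (forall y, linear (mu^~ y)) /\ (forall x, linear (mu x)).

(* The G-Hom-associativity identity, for G a subgroup of Sigma_3 = 'S_3
   (acting on the indices {0,1,2} = {1,2,3}). *)
Definition GHomAssoc (K : fieldType) (V : lmodType K) (G : {group 'S_3})
    (mu : V -> V -> V) (alpha : V -> V) : Prop :=
  forall x : 'I_3 -> V,
    \sum_(s in G) (-1) ^+ odd_perm s *:
      (mu (mu (x (s 0)) (x (s 1))) (alpha (x (s 2)))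
       - mu (alpha (x (s 0))) (mu (x (s 1)) (x (s 2)))) = 0.

Definition is_GHomAssocAlg (K : fieldType) (V : lmodType K) (G : {group 'S_3})
    (mu : V -> V -> V) (alpha : V -> V) : Prop :=
  [/\ bilinear_mul mu, linear alpha & GHomAssoc G mu alpha].

Definition is_GAssocAlg (K : fieldType) (V : lmodType K) (G : {group 'S_3})
    (mu : V -> V -> V) : Prop :=
  bilinear_mul mu /\ GHomAssoc G mu id.

Definition is_GHomAssoc_morphism (K : fieldType) (V W : lmodType K)
    (alphaV : V -> V) (muV : V -> V -> V) (alphaW : W -> W) (muW : W -> W -> W)
    (f : V -> W) : Prop :=
  [/\ linear f,
      (forall x, f (alphaV x) = alphaW (f x)) &
      (forall x y, f (muV x y) = muW (f x) (f y))].

(* Main.v *)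
Require Import Defs.
From HB Require Import structures.
From mathcomp Require Import all_boot all_order all_algebra all_fingroup.
Import GRing.Theory.
Local Open Scope ring_scope.

Lemma lin_comp (K : fieldType) (U V W : lmodType K) (g : V -> W) (h : U -> V) :
  linear g -> linear h -> linear (fun x => g (h x)).
Proof. by move=> Hg Hh a u v; rewrite Hh Hg. Qed.

Lemma lin_sum (K : fieldType) (U V : lmodType K) (g : U -> V) (I : finType) (P : pred I) F :
  linear g -> g (\sum_(i | P i) F i) = \sum_(i | P i) g (F i).
Proof.
move=> Hg.
have g0 : g 0 = 0.
  by have := Hg 1 0 0; rewrite !scale1r addr0 => /eqP; rewrite eq_sym -subr_eq0 addrK => /eqP.
elim/big_ind2: _ => //.
by move=> a b c d <- <-; have := Hg 1 b d; rewrite !scale1r.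
Qed.

Lemma lin_scale (K : fieldType) (U V : lmodType K) (g : U -> V) a x :
  linear g -> g (a *: x) = a *: g x.
Proof.
move=> Hg.
have g0 : g 0 = 0.
  by have := Hg 1 0 0; rewrite !scale1r addr0 => /eqP; rewrite eq_sym -subr_eq0 addrK => /eqP.
by have := Hg a x 0; rewrite !addr0 g0 addr0.
Qed.

Lemma lin_sub (K : fieldType) (U V : lmodType K) (g : U -> V) x y :
  linear g -> g (x - y) = g x - g y.
Proof.
move=> Hg; have := Hg (-1) y x; rewrite !scaleN1r.
by rewrite [- y + x]addrC => ->; rewrite addrC.
Qed.

Theorem theorem2p1 (K : fieldType) (hchar : [pchar K] =i pred0)
    (G : {group 'S_3})
    (A : lmodType K) (mu : A -> A -> A) (alpha : A -> A)
    (B : lmodType K) (mu' : B -> B -> B) (alpha' : B -> B) :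
  is_GAssocAlg G mu -> linear alpha ->
  (forall x y, alpha (mu x y) = mu (alpha x) (alpha y)) ->
  [/\ is_GHomAssocAlg G (fun x y => alpha (mu x y)) alpha,
      (forall x y, alpha (alpha (mu x y)) = alpha (mu (alpha x) (alpha y))) &
      (is_GAssocAlg G mu' -> linear alpha' ->
       (forall x y, alpha' (mu' x y) = mu' (alpha' x) (alpha' y)) ->
       forall f : A -> B, linear f ->
       (forall x y, f (mu x y) = mu' (f x) (f y)) ->
       (forall x, f (alpha x) = alpha' (f x)) ->
       is_GHomAssoc_morphism alpha (fun x y => alpha (mu x y))
                             alpha' (fun x y => alpha' (mu' x y)) f)].
Proof.
move=> [[Hl Hr] HG] Ha Hm; split.
- split => //.
  + split=> [y|x]; apply: lin_comp => //.
  + move=> x.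
    have Haa : linear (fun v => alpha (alpha v)) := @lin_comp _ _ _ _ alpha alpha Ha Ha.
    transitivity (alpha (alpha (\sum_(s in G) (-1) ^+ odd_perm s *:
      (mu (mu (x (s 0)) (x (s 1))) (id (x (s 2)))
       - mu (id (x (s 0))) (mu (x (s 1)) (x (s 2))))))); last first.
      rewrite HG; have := @lin_scale _ _ _ _ 0 0 Haa; by rewrite !scale0r.
    rewrite (@lin_sum _ _ _ _ _ _ _ Haa); apply: eq_bigr => s _.
    rewrite (@lin_scale _ _ _ _ _ _ Haa) (@lin_sub _ _ _ _ _ _ Haa) /=.
    by rewrite -Hm -Hm.
- by move=> x y; rewrite Hm.
- move=> _ Ha' Hm' f Hf Hfm Hfa; split => //.
  by move=> x y; rewrite Hfa Hfm.
Qed.
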